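(* For each positive integer $n$, \[ p^{(2)}(n) = \frac{1}{2}\Bigl\{ \sum_{j=1}^{n-1} d(j)\, d(n-j) + d(n) - \sigma(n)\Bigr\}. \]
   Context: $p^{(2)}(n)$ is the number of partitions of $n$ having exactly two distinct part sizes; $d(n)$ is the number of positive divisors of $n$; $\sigma(n) = \sum_{d \mid n} d$. *)

(* Defs.v *)
From mathcomp Require Import all_boot all_order.
Set Implicit Arguments. Unset Strict Implicit. Unset Printing Implicit Defensive.

(* A partition of n is encoded as an n-tuple of naturals < n+1, sorted in
   nonincreasing order and summing to n; the nonzero entries are the parts
   (zeros are padding). Every partition of n has at most n parts, each <= n,
   so this is a bijection with the partitions of n. *)
Definition parts_of (n : nat) (t : n.-tuple 'I_n.+1) : seq nat :=
  [seq x <- map val t | 0 < x].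

Definition is_partition (n : nat) (t : n.-tuple 'I_n.+1) : bool :=
  sorted geq (map val t) && (sumn (map val t) == n).

Definition num_distinct_parts (n : nat) (t : n.-tuple 'I_n.+1) : nat :=
  size (undup (parts_of t)).

Definition p2 (n : nat) : nat :=
  #|[set t : n.-tuple 'I_n.+1 | is_partition t && (num_distinct_parts t == 2)]|.

Definition ndiv (n : nat) : nat := size (divisors n).
Definition sigma (n : nat) : nat := \sum_(d <- divisors n) d.

(* Main.v *)
Require Import Defs.
From mathcomp Require Import all_boot all_order all_algebra.
From mathcomp Require Import zify.
From mathcomp Require Import lra.
Import GRing.Theory Num.Theory.

Definition gf (a b x y i : nat) := if i < x then a else if i < x + y then b else 0.
Definition Lseq n a b x y := mkseq (gf a b x y) n.
Arguments Lseq : simpl never.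

Lemma map_iota_const (g : nat -> nat) c m k :
  (forall i, m <= i < m + k -> g i = c) -> map g (iota m k) = nseq k c.
Proof.
elim: k m => [|k IH] m H //=.
rewrite H; last by lia.
rewrite IH // => i Hi; apply: H; lia.
Qed.

Lemma Lseq_cat n a b x y : x + y <= n ->
  Lseq n a b x y = nseq x a ++ nseq y b ++ nseq (n - (x + y)) 0.
Proof.
move=> Hn; rewrite /Lseq /mkseq.
have -> : n = x + (y + (n - (x + y))) by lia.
rewrite !iotaD !map_cat.
rewrite (@map_iota_const (gf a b x y) a 0 x); last by move=> i Hi; rewrite /gf; (repeat case: ifP); lia.
rewrite (@map_iota_const (gf a b x y) b (0+x) y); last by move=> i Hi; rewrite /gf; (repeat case: ifP); lia.
rewrite (@map_iota_const (gf a b x y) 0 (0+x+y)); last by move=> i Hi; rewrite /gf; (repeat case: ifP); lia.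
congr (_ ++ _ ++ nseq _ _); lia.
Qed.

Lemma sorted_L n a b x y : b <= a -> sorted geq (Lseq n a b x y).
Proof.
move=> Hba; rewrite /Lseq /mkseq; apply: (homo_sorted (e:=leq)); last exact: iota_sorted.
move=> i j Hij /=.
rewrite /gf; do 4 (repeat case: ifP); lia.
Qed.

Lemma sum3 (F : nat -> nat) c0 c1 c2 (s : seq nat) :
  uniq [:: c0; c1; c2] -> all (mem [:: c0; c1; c2]) s ->
  \sum_(z <- s) F z = F c0 * count_mem c0 s + F c1 * count_mem c1 s + F c2 * count_mem c2 s.
Proof.
move=> U; elim: s => [|z s IH] /=; first by rewrite big_nil !muln0.
case/andP=> Hz Hs; rewrite big_cons IH //.
move: U Hz; rewrite /= !inE => /andP[/norP[h01 h02] /andP[h12 _]].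
have h10 : c1 != c0 by rewrite eq_sym.
have h20 : c2 != c0 by rewrite eq_sym.
have h21 : c2 != c1 by rewrite eq_sym.
case/or3P=> /eqP ->; rewrite /= ?eqxx ?(negPf h01) ?(negPf h02) ?(negPf h12)
  ?(negPf h10) ?(negPf h20) ?(negPf h21) /=; lia.
Qed.
Definition ftup n (q : 'I_n.+1 * 'I_n.+1 * 'I_n.+1 * 'I_n.+1) : n.-tuple 'I_n.+1 :=
  [tuple inord (gf q.1.1.1 q.1.1.2 q.1.2 q.2 i) | i < n].
Lemma mapval_ftup n q : map val (@ftup n q) = Lseq n q.1.1.1 q.1.1.2 q.1.2 q.2.
Proof.
rewrite /ftup /Lseq /mkseq /= -map_comp -val_enum_ord -map_comp.
apply: eq_map => i /=; rewrite inordK //.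
rewrite /gf; case: q => [[[a b] x] y] /=; (repeat case: ifP) => *; rewrite ?ltnS ?leq_ord //.
Qed.

Lemma Lfacts n a b x y : 0 < b < a -> 0 < x -> 0 < y -> x + y <= n ->
  let s := Lseq n a b x y in
  [/\ nth 0 s 0 = a, count_mem a s = x, nth 0 s x = b, count_mem b s = y
   & count_mem 0 s = n - (x + y)].
Proof.
move=> /andP[b0 ba] x0 y0 Hn /=; rewrite Lseq_cat //.
have ab : (a == b) = false by apply/negbTE; rewrite neq_ltn ba orbT.
have ba' : (b == a) = false by rewrite eq_sym.
have a0 : (a == 0) = false by apply/negbTE; rewrite -lt0n; lia.
have a0' : (0 == a) = false by rewrite eq_sym.
have b0' : (b == 0) = false by apply/negbTE; rewrite -lt0n.
have b0'' : (0 == b) = false by rewrite eq_sym.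
rewrite !count_cat !count_nseq /= ab ba' a0 a0' b0' b0'' !eqxx.
split; try lia.
- by rewrite nth_cat size_nseq x0 nth_nseq x0.
- by rewrite nth_cat size_nseq ltnn subnn nth_cat size_nseq y0 nth_nseq y0.
Qed.

Definition Qok n (q : 'I_n.+1 * 'I_n.+1 * 'I_n.+1 * 'I_n.+1) : bool :=
  [&& 0 < q.1.1.2, q.1.1.2 < q.1.1.1, 0 < q.1.2, 0 < q.2 &
      q.1.1.1 * q.1.2 + q.1.1.2 * q.2 == n].

Lemma Qok_le n q : @Qok n q -> q.1.2 + q.2 <= n.
Proof. case: q => [[[a b] x] y]; rewrite /Qok /= => /andP[hb /andP[hab /andP[hx /andP[hy /eqP E]]]].
have h1 : (x <= a * x)%N by apply: leq_pmull; lia.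
have h2 : (y <= b * y)%N by apply: leq_pmull.
lia. Qed.

Lemma ftup_inj n : {in [pred q | @Qok n q] &, injective (@ftup n)}.
Proof.
move=> [[[a1 b1] x1] y1] [[[a2 b2] x2] y2] H1 H2 E.
have L1 := @Qok_le n _ H1; have L2 := @Qok_le n _ H2.
move: L1 L2 H1 H2; rewrite !inE /Qok /= => L1 L2 /andP[h1 /andP[h2 /andP[h3 /andP[h4 _]]]] /andP[k1 /andP[k2 /andP[k3 /andP[k4 _]]]].
have := congr1 (fun t : n.-tuple 'I_n.+1 => map val (tval t)) E; rewrite !mapval_ftup /= => E'.
have hh1 : 0 < b1 < a1 by rewrite h1 h2.
have hh2 : 0 < b2 < a2 by rewrite k1 k2.
have [A1 X1 B1 Y1 _] := @Lfacts n _ _ _ _ hh1 h3 h4 L1.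
have [A2 X2 B2 Y2 _] := @Lfacts n _ _ _ _ hh2 k3 k4 L2.
have ea : a1 = a2 by apply: val_inj; rewrite /= -A1 -A2 E'.
have ex : x1 = x2 by apply: val_inj; rewrite /= -X1 -X2 E' ea.
have eb : b1 = b2 by apply: val_inj; rewrite /= -B1 -B2 E' ex.
have ey : y1 = y2 by apply: val_inj; rewrite /= -Y1 -Y2 E' eb.
by rewrite ea ex eb ey.
Qed.

Lemma ftup_in n q : @Qok n q ->
  is_partition (ftup n q) && (num_distinct_parts (ftup n q) == 2).
Proof.
move=> H; have Le := @Qok_le n q H.
move: H Le; case: q => [[[a b] x] y]; rewrite /Qok /= => /andP[hb /andP[hab /andP[hx /andP[hy /eqP E]]]] Le.
rewrite /is_partition /num_distinct_parts /parts_of mapval_ftup /=.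
rewrite sorted_L /=; last exact: ltnW.
rewrite Lseq_cat // !sumn_cat !sumn_nseq /= !filter_cat !filter_nseq /=.
have a0 : 0 < a by lia.
rewrite a0 hb /= !mul1n cats0 addn0.
apply/andP; split; first by apply/eqP; lia.
have ab : (a:nat) != b by rewrite neq_ltn hab orbT.
have P : perm_eq (undup (nseq x (a:nat) ++ nseq y (b:nat))) [:: (a:nat); (b:nat)].
  apply: uniq_perm; first exact: undup_uniq.
    by rewrite /= inE ab.
  by move=> z; rewrite mem_undup mem_cat !mem_nseq !inE hx hy.
by rewrite (perm_size P).
Qed.

Lemma count_sum (p : pred nat) (r : seq nat) : count p r = \sum_(z <- r) (p z : nat).
Proof. by rewrite -sum1_count big_mkcond. Qed.

Lemma ftup_surj n (t : n.-tuple 'I_n.+1) :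
  is_partition t && (num_distinct_parts t == 2) -> exists2 q, @Qok n q & t = ftup n q.
Proof.
move=> /andP[/andP[Hs /eqP Hsum] /eqP Hd].
rewrite /num_distinct_parts /parts_of in Hd.
set s := map val t in Hs Hsum Hd.
have Hsz : size s = n by rewrite size_map size_tuple.
have Hle : forall z, z \in s -> z <= n by move=> z /mapP[i _ ->]; rewrite -ltnS ltn_ord.
case E: (undup [seq x <- s | 0 < x]) Hd => [|u [|v [|w r]]] //= _.
have U := undup_uniq [seq x <- s | 0 < x]; rewrite E /= inE andbT in U.
have Mem : forall z, (z \in [seq x <- s | 0 < x]) = (z \in [:: u; v])
  by move=> z; rewrite -mem_undup E.
have Hu : (0 < u) && (u \in s) by rewrite -mem_filter Mem inE eqxx.
have Hv : (0 < v) && (v \in s) by rewrite -mem_filter Mem !inE eqxx orbT.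
case/andP: Hu => u0 us; case/andP: Hv => v0 vs.
set a := maxn u v; set b := minn u v.
have a_s : a \in s by rewrite /a /maxn; case: ifP.
have b_s : b \in s by rewrite /b /minn; case: ifP.
have hb : 0 < b by rewrite /b; lia.
have hab : b < a by rewrite /a /b; lia.
have Hall : all (mem [:: 0; a; b]) s.
  apply/allP => z zs; rewrite !inE; case z0: (0 < z); last by move: z0; rewrite lt0n => /negbFE ->.
  have : z \in [seq x <- s | 0 < x] by rewrite mem_filter z0.
  rewrite Mem !inE => /orP[] /eqP ->; rewrite /a /b /maxn /minn; case: ltngtP => // _;
    rewrite eqxx ?orbT //.
have Hu3 : uniq [:: 0; a; b].
  rewrite /= !inE negb_or andbT; apply/andP; split; [apply/andP; split|]; lia.
set x := count_mem a s; set y := count_mem b s.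
have hx : 0 < x by rewrite /x -has_count has_pred1.
have hy : 0 < y by rewrite /y -has_count has_pred1.
have Hs1 := @sum3 (fun z => z) _ _ _ _ Hu3 Hall.
rewrite -sumnE Hsum /= mul0n add0n -/x -/y in Hs1.
have Hs2 := @sum3 (fun z => 1) _ _ _ _ Hu3 Hall.
rewrite sum1_size Hsz !mul1n -/x -/y in Hs2.
have Hxy : x + y <= n by lia.
have ha : a <= n by apply: Hle.
have hb' : b <= n by apply: Hle.
have hx' : x <= n by rewrite -Hsz count_size.
have hy' : y <= n by rewrite -Hsz count_size.
exists (inord a, inord b, inord x, inord y).
  rewrite /Qok /= !inordK ?ltnS // hb hab hx hy /=; apply/eqP; lia.
apply: val_inj; apply: (inj_map val_inj); rewrite mapval_ftup /= !inordK ?ltnS //.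
have hab' : 0 < b < a by rewrite hb hab.
have [_ Xa _ Yb Z0] := @Lfacts n _ _ _ _ hab' hx hy Hxy.
apply: (sorted_eq (leT := geq)) => //.
- by move=> p q r /= h1 h2; apply: leq_trans h2 h1.
- by move=> p q /= /andP[h1 h2]; apply/eqP; rewrite eqn_leq h1 h2.
- by apply: sorted_L; apply: ltnW.
have HallL : all (mem [:: 0; a; b]) (Lseq n a b x y).
  rewrite Lseq_cat // !all_cat !all_nseq !inE eqxx !orbT.
  by rewrite eqxx !orbT.
apply/permP => p; rewrite !count_sum (@sum3 _ _ _ _ _ Hu3 Hall) (@sum3 _ _ _ _ _ Hu3 HallL) Xa Yb Z0.
congr (_ + _ + _); congr (_ * _); lia.
Qed.

Lemma PL m (k : nat) (G : nat -> nat) : \sum_(j < m) (k == j :> nat) * G j = (k < m) * G k.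
Proof.
elim: m => [|m IH]; first by rewrite big_ord0.
rewrite big_ord_recr /= IH.
case: (ltngtP k m) => [h|h|->].
- by rewrite ltnS ltnW //= addn0.
- by rewrite ltnS leqNgt h /=.
- by rewrite ltnSn /=.
Qed.

Lemma DV n j (F : nat -> nat) : 0 < j <= n ->
  \sum_(d <- divisors j) F d = \sum_(d < n.+1 | d %| j) F d.
Proof.
case/andP=> j0 jn.
rewrite -(big_mkord (fun d => d %| j)) -(big_filter (index_iota 0 n.+1)); apply: perm_big; apply: uniq_perm.
- exact: divisors_uniq.
- by rewrite filter_uniq ?iota_uniq.
move=> d; rewrite mem_filter mem_iota add0n -dvdn_divisors //.
case dj: (d %| j) => //=; have := dvdn_leq j0 dj; lia.
Qed.

Lemma cnt_between m s : \sum_(x < m) (0 < x < s) = (minn m s).-1.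
Proof.
elim: m => [|m IH]; first by rewrite big_ord0 min0n.
rewrite big_ord_recr /= IH.
case: (ltnP m s) => h.
- rewrite andbT; have -> : minn m.+1 s = m.+1 by lia.
  by case: m {IH} h => //= m _; rewrite addn1.
- rewrite andbF addn0; congr (_.-1); lia.
Qed.

Lemma L1 n c j : j <= n ->
  \sum_(x < n.+1) (0 < c) && (0 < x) && (c * x == j) = (0 < c) && (0 < j) && (c %| j).
Proof.
move=> jn.
have [c00|c0'] := eqVneq c 0.
  by rewrite c00 big1 // => i _.
have c0 : 0 < c by rewrite lt0n.
have E : forall x, ((0 < c) && (0 < x) && (c * x == j) : nat) =
      (j %/ c == x) * ((0 < c) && (0 < j) && (c %| j)).
  move=> x; rewrite c0 /=.
  case dv: (c %| j).
    case/dvdnP: dv => k ->; rewrite mulnK // [k * c]mulnC eqn_pmul2l // muln_gt0 c0 andbT.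
    case: (eqVneq k x) => [->|ne]; rewrite ?eqxx ?(negPf ne) ?andbT ?andbF //=; by rewrite mul1n.
  rewrite andbF muln0; case e: (c * x == j); last by rewrite andbF. move/eqP: e => e.
  by move: dv; rewrite -e (dvdn_mulr _ (dvdnn c)).
rewrite (eq_bigr (fun x : 'I_n.+1 => (j %/ c == x) * ((0 < c) && (0 < j) && (c %| j)))); last by move=> x _; exact: E.
rewrite (PL n.+1 (j %/ c) (fun _ => (0<c) && (0<j) && (c %| j))).
have : j %/ c <= j := leq_div j c.
case: ((0 < c) && (0 < j) && (c %| j)) => //; rewrite ?muln0 // muln1.
move=> h; apply/eqP; rewrite eqb1 ltnS; lia.
Qed.

Definition Cq n (a b x y : nat) : bool := [&& 0 < a, 0 < b, 0 < x, 0 < y & a * x + b * y == n].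
Definition Dn n j := \sum_(a < n.+1) \sum_(x < n.+1) ((0 < a) && (0 < x) && (a * x == j) : nat).

Lemma Dn_val n j : j <= n -> Dn n j = (0 < j) * ndiv j.
Proof.
move=> jn; rewrite /Dn.
rewrite (eq_bigr (fun a : 'I_n.+1 => ((0 < a) && (0 < j) && (a %| j) : nat))); last first.
  by move=> a _; exact: L1.
case: (posnP j) => [->|j0].
  by rewrite big1 // => a _; rewrite andbF.
rewrite mul1n /ndiv -sum1_size (@DV n j (fun _ => 1)); last by rewrite j0.
rewrite [RHS]big_mkcond /=.
apply: eq_bigr => a _; case d: (a %| j); rewrite ?andbF ?andbT //=.
by rewrite (dvdn_gt0 j0 d).
Qed.

Lemma Cq_split n (a b x y : nat) :
  (Cq n a b x y : nat) = \sum_(j < n.+1) ((0 < a) && (0 < x) && (a * x == j) : nat) *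
                                        ((0 < b) && (0 < y) && (b * y == n - j) : nat).
Proof.
rewrite (eq_bigr (fun j : 'I_n.+1 => (a * x == j) *
   (((0<a)&&(0<x)) * ((0<b)&&(0<y)&&(b*y == n - j))))); last first.
  move=> j _; rewrite !mulnb; congr nat_of_bool; lia.
rewrite (PL n.+1 (a * x) (fun j => ((0<a)&&(0<x)) * ((0<b)&&(0<y)&&(b*y == n - j)))).
rewrite !mulnb; congr nat_of_bool; rewrite /Cq; lia.
Qed.

Lemma Total n : 0 < n ->
  \sum_(a < n.+1) \sum_(b < n.+1) \sum_(x < n.+1) \sum_(y < n.+1) (Cq n a b x y : nat) =
  \sum_(1 <= j < n) ndiv j * ndiv (n - j).
Proof.
move=> n0.
have step1 : \sum_(a < n.+1) \sum_(b < n.+1) \sum_(x < n.+1) \sum_(y < n.+1) (Cq n a b x y : nat)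
   = \sum_(j < n.+1) Dn n j * Dn n (n - j).
  rewrite /Dn; symmetry.
  under eq_bigr => j _ do rewrite big_distrl /=.
  under eq_bigr => j _ do under eq_bigr => a _ do rewrite big_distrl /=.
  under eq_bigr => j _ do under eq_bigr => a _ do under eq_bigr => x _ do rewrite big_distrr /=.
  under eq_bigr => j _ do under eq_bigr => a _ do under eq_bigr => x _ do
     under eq_bigr => b _ do rewrite big_distrr /=.
  rewrite exchange_big; apply: eq_bigr => a _ /=.
  rewrite exchange_big [RHS]exchange_big; apply: eq_bigr => x _ /=.
  rewrite exchange_big; apply: eq_bigr => b _ /=.
  rewrite exchange_big; apply: eq_bigr => y _ /=.
  by rewrite Cq_split.
rewrite step1.
rewrite (eq_bigr (fun j : 'I_n.+1 => ((0 < j) * ndiv j) * ((0 < n - j) * ndiv (n - j)))); last first.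
  by move=> j _; rewrite !Dn_val // ?leq_subr // -ltnS.
rewrite -(big_mkord xpredT (fun j => ((0 < j) * ndiv j) * ((0 < n - j) * ndiv (n - j)))).
rewrite big_nat_recr //= subnn muln0 addn0 big_ltn //= mul0n add0n.
apply: eq_big_nat => j /andP[j1 jn].
have -> : 0 < j by lia.
have -> : 0 < n - j by lia.
by rewrite !mul1n.
Qed.

Lemma Teq n : 0 < n ->
  \sum_(a < n.+1) \sum_(b < n.+1) \sum_(x < n.+1) \sum_(y < n.+1)
     ((a == b :> nat) && Cq n a b x y : nat) + ndiv n = sigma n.
Proof.
move=> n0.
have step1 : forall a : 'I_n.+1, \sum_(b < n.+1) \sum_(x < n.+1) \sum_(y < n.+1)
     ((a == b :> nat) && Cq n a b x y : nat) =
   \sum_(s < n.+1) ((0 < s) && (0 < a) && (s * a == n) : nat) * s.-1.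
  move=> a.
  rewrite (eq_bigr (fun b : 'I_n.+1 => (a == b :> nat) *
       \sum_(x < n.+1) \sum_(y < n.+1) (Cq n a b x y : nat))); last first.
    move=> b _; rewrite big_distrr; apply: eq_bigr => x _; rewrite big_distrr.
    by apply: eq_bigr => y _; rewrite /= mulnb.
  rewrite (PL n.+1 a (fun b => \sum_(x < n.+1) \sum_(y < n.+1) (Cq n a b x y : nat))) ltn_ord mul1n.
  have ins : forall x y : nat, (Cq n a a x y : nat) =
     \sum_(s < n.+1) ((0 < x) && (0 < y) && (x + y == s) : nat) *
                      ((0 < s) && (0 < a) && (s * a == n) : nat).
    move=> x y.
    rewrite (eq_bigr (fun s : 'I_n.+1 => (x + y == s) *
       (((0<x)&&(0<y)) * ((0<s) && (0<a) && (s*a == n))))); last first.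
      by move=> s _; rewrite !mulnb; congr nat_of_bool; lia.
    rewrite (PL n.+1 (x + y) (fun s => (((0<x)&&(0<y)) : nat) * ((0<s) && (0<a) && (s*a == n)))).
    rewrite !mulnb; congr nat_of_bool; rewrite /Cq.
    have E : (x + y) * a = a * x + a * y by rewrite mulnDl !(mulnC _ a).
    case: (posnP a) => [->|a0]; first by rewrite muln0 mul0n; lia.
    have h1 : x <= a * x by apply: leq_pmull.
    have h2 : y <= a * y by apply: leq_pmull.
    rewrite E; lia.
  under eq_bigr => x _ do under eq_bigr => y _ do rewrite ins.
  under eq_bigr => x _ do rewrite exchange_big /=.
  rewrite exchange_big /=.
  rewrite (eq_bigr (fun s : 'I_n.+1 => ((0 < s) && (0 < a) && (s * a == n) : nat) *
        \sum_(x < n.+1) \sum_(y < n.+1) ((0 < x) && (0 < y) && (x + y == s) : nat))); last first.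
    move=> s _; rewrite big_distrr; apply: eq_bigr => x _; rewrite big_distrr.
    by apply: eq_bigr => y _; rewrite mulnC.
  apply: eq_bigr => s _.
  have Hs : \sum_(x < n.+1) \sum_(y < n.+1) ((0 < x) && (0 < y) && (x + y == s) : nat) = s.-1.
    rewrite (eq_bigr (fun x : 'I_n.+1 => (0 < x < s) : nat)); last first.
      move=> x _.
      rewrite (eq_bigr (fun y : 'I_n.+1 => (s - x == y) * (0 < x < s))); last first.
        by move=> y _; rewrite mulnb; congr nat_of_bool; lia.
      rewrite (PL n.+1 (s - x) (fun _ => (0 < x < s) : nat)).
      have -> : s - x < n.+1 by have := ltn_ord s; lia.
      by rewrite mul1n.
    rewrite cnt_between; congr (_.-1); have := ltn_ord s; lia.
  by rewrite Hs.
rewrite (eq_bigr _ (fun a _ => step1 a)) exchange_big /=.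
rewrite (eq_bigr (fun s : 'I_n.+1 => ((0 < s) && (0 < n) && (s %| n) : nat) * s.-1)); last first.
  by move=> s _; rewrite -big_distrl /= L1.
rewrite /sigma /ndiv -sum1_size !(@DV n n); try by rewrite n0 leqnn.
rewrite [X in _ + X]big_mkcond [RHS]big_mkcond -big_split /=.
apply: eq_bigr => s _; rewrite n0 andbT.
case d: (s %| n); rewrite ?andbF //= ?mul0n //.
by rewrite (dvdn_gt0 n0 d) mul1n addn1 prednK // (dvdn_gt0 n0 d).
Qed.

Definition S4 n (F : nat -> nat -> nat -> nat -> nat) :=
  \sum_(a < n.+1) \sum_(b < n.+1) \sum_(x < n.+1) \sum_(y < n.+1) F a b x y.

Lemma S4_split n F G : S4 n F + S4 n G = S4 n (fun a b x y => F a b x y + G a b x y).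
Proof.
rewrite /S4 -big_split; apply: eq_bigr => a _ /=.
rewrite -big_split; apply: eq_bigr => b _ /=.
rewrite -big_split; apply: eq_bigr => x _ /=.
by rewrite -big_split.
Qed.

Lemma swap4 n : S4 n (fun a b x y => ((a < b) && Cq n a b x y : nat)) =
                S4 n (fun a b x y => ((b < a) && Cq n a b x y : nat)).
Proof.
rewrite /S4 [LHS]exchange_big; apply: eq_bigr => b _; apply: eq_bigr => a _.
rewrite [LHS]exchange_big; apply: eq_bigr => y _; apply: eq_bigr => x _.
congr nat_of_bool; rewrite /Cq; lia.
Qed.

Lemma card_Q n : #|[pred q | @Qok n q]| = S4 n (fun a b x y => ((b < a) && Cq n a b x y : nat)).
Proof.
rewrite -sum1_card big_mkcond /=.
transitivity (\sum_(p : 'I_n.+1 * 'I_n.+1 * 'I_n.+1) \sum_(y : 'I_n.+1) (Qok n (p, y) : nat)).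
  rewrite (pair_bigA addn); apply: eq_bigr => -[p y] _; rewrite inE /=; by case: (Qok _ _).
transitivity (\sum_(p : 'I_n.+1 * 'I_n.+1) \sum_(x : 'I_n.+1) \sum_(y : 'I_n.+1) (Qok n (p, x, y) : nat)).
  by rewrite [RHS](pair_bigA addn); apply: eq_bigr => -[p x] _.
rewrite /S4 [RHS](pair_bigA addn); apply: eq_bigr => -[a b] _ /=.
apply: eq_bigr => x _; apply: eq_bigr => y _.
congr nat_of_bool; rewrite /Qok /Cq /=; lia.
Qed.

Lemma p2_card n : p2 n = #|[pred q | @Qok n q]|.
Proof.
rewrite /p2 -(card_in_imset (@ftup_inj n)); apply: eq_card => t.
rewrite inE; apply/idP/imsetP.
- by case/ftup_surj => q Hq ->; exists q.
- by case=> q Hq ->; apply: ftup_in.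
Qed.

Lemma key n : 0 < n ->
  (2 * p2 n + sigma n = \sum_(1 <= j < n) ndiv j * ndiv (n - j) + ndiv n)%N.
Proof.
move=> n0.
rewrite -(@Total n n0) -(@Teq n n0) p2_card card_Q.
have E1 := swap4 n.
have E2 : S4 n (fun a b x y => Cq n a b x y : nat) =
   S4 n (fun a b x y => ((b < a) && Cq n a b x y : nat)) +
   S4 n (fun a b x y => ((a < b) && Cq n a b x y : nat)) +
   S4 n (fun a b x y => ((a == b :> nat) && Cq n a b x y : nat)).
  rewrite !S4_split /S4; apply: eq_bigr => a _; apply: eq_bigr => b _.
  apply: eq_bigr => x _; apply: eq_bigr => y _.
  by case: (ltngtP a b); case: (Cq n a b x y).
rewrite /S4 in E1 E2; rewrite E2 -E1 /S4; lia.
Qed.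

Local Open Scope ring_scope.

Theorem corollary2p5 (n : nat) : (0 < n)%N ->
  (p2 n)%:R =
    (1 / 2 : rat) *
    ((\sum_(1 <= j < n) ((ndiv j * ndiv (n - j))%N)%:R)
       + (ndiv n)%:R - (sigma n)%:R).
Proof.
move=> n0; have K := congr1 (fun m : nat => m%:R : rat) (@key n n0).
rewrite /= !natrD in K.
rewrite -natr_sum.
lra.
Qed.
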